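(* Let $f:\mathbb R^n\to\mathbb R$ be a non-degenerate polynomial with $f(0)=0$. Then $$L_e(f)=\sup\{h(a):a\in R_1\},\qquad R_1=\{a\in\mathbb R^n_{\ge0}:0\le m_f(a)\le1\}.$$
   Context: Write $f=\sum_\nu c_\nu x^\nu$. $\Gamma_+(f)$ is the convex hull of $\bigcup_{c_\nu\ne0}(\nu+\mathbb R^n_{\ge0})$. For $a\in\mathbb R^n_{\ge0}$: $m_f(a)=\min\{\langle a,\nu\rangle:\nu\in\Gamma_+(f)\}$, $\gamma_f(a)=\{\nu\in\Gamma_+(f):\langle a,\nu\rangle=m_f(a)\}$, $s(a)=\sum_ia_i$, $h(a)=m_f(a)-s(a)$. For a face $\gamma$, $f_\gamma=\sum_{\nu\in\gamma}c_\nu x^\nu$; $f$ is non-degenerate if for every compact face $\gamma$, $\nabla f_\gamma$ does not vanish at points of $(\mathbb R^* )^n$ where $f_\gamma=0$. On $\mathbb R^n_{\ge0}$ put $a\sim b$ iff $\gamma_f(a)=\gamma_f(b)$; this gives a subdivision of $\mathbb R^n_{\ge0}$ into cones; $\Gamma^{(1)}(f)$ is the set of primitive integer generators of its one-dimensional cones and $\Gamma^{(1)}_+(f)=\{a\in\Gamma^{(1)}(f):m_f(a)>0\}$. The leading exponent is $L_e(f)=\sup\bigl(\{0\}\cup\{1-s(a)/m_f(a):a\in\Gamma^{(1)}_+(f)\}\bigr)$. *)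

(* Defs.v *)
From HB Require Import structures.
From mathcomp Require Import all_boot all_order all_algebra.
From mathcomp Require Import boolp classical_sets reals.
From mathcomp Require Import mpoly.

Set Implicit Arguments.
Unset Strict Implicit.
Unset Printing Implicit Defensive.

Import Order.TTheory GRing.Theory Num.Theory.
Local Open Scope ring_scope.
Local Open Scope classical_set_scope.

Section Newton.
Variables (R : realType) (n : nat).
Implicit Types (f : {mpoly R[n]}) (a b x y : 'I_n -> R).

Definition dotv a x : R := \sum_(i < n) a i * x i.
Definition sv a : R := \sum_(i < n) a i.
Definition nonneg a : Prop := forall i, 0 <= a i.
Definition expv (m : 'X_{1..n}) : 'I_n -> R := fun i => (m i)%:R.

Definition shifted_supp f : set ('I_n -> R) :=
  [set x | exists2 m, m \in msupp f & forall i, expv m i <= x i].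

Definition conv_hull (S : set ('I_n -> R)) : set ('I_n -> R) :=
  [set x | exists k (w : 'I_k -> R) (p : 'I_k -> ('I_n -> R)),
     [/\ forall j, 0 <= w j, \sum_(j < k) w j = 1, forall j, S (p j) &
         forall i, x i = \sum_(j < k) w j * p j i]].

Definition Gamma_plus f : set ('I_n -> R) := conv_hull (shifted_supp f).

Definition m_f f a : R := inf [set dotv a x | x in Gamma_plus f].

Definition gamma_f f a : set ('I_n -> R) :=
  [set x | Gamma_plus f x /\ dotv a x = m_f f a].

Definition h_f f a : R := m_f f a - sv a.

(* faces of Gamma_+(f): the sets gamma_f(a), a in R^n_{>=0}; compact = bounded
   (these faces are closed) *)
Definition compact_face f (g : set ('I_n -> R)) : Prop :=
  (exists2 a, nonneg a & g = gamma_f f a) /\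
  exists M : R, forall x, g x -> forall i, `|x i| <= M.

Definition f_face f (g : set ('I_n -> R)) : {mpoly R[n]} :=
  \sum_(m <- msupp f | `[< g (expv m) >]) f@_m *: 'X_[m].

Definition newton_nondegenerate f : Prop :=
  forall g, compact_face f g ->
  forall x, (forall i, x i != 0) -> meval x (f_face f g) = 0 ->
  exists i, meval x (mderiv i (f_face f g)) != 0.

(* a ~ b iff gamma_f(a) = gamma_f(b) (on R^n_{>=0}).  The cone (equivalence class)
   of a is one-dimensional with generator a iff a <> 0 and the class of a
   spans the line R a. *)
Definition one_dim_cone_gen f a : Prop :=
  nonneg a /\ a <> (fun _ => 0) /\
  forall b, nonneg b -> gamma_f f b = gamma_f f a -> exists t : R, b = (fun i => t * a i).

Definition primitive_int a : Prop :=
  exists k : 'I_n -> nat, (forall i, a i = (k i)%:R) /\ \big[gcdn/0%N]_(i < n) k i = 1%N.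

Definition Gamma1 f : set ('I_n -> R) :=
  [set a | one_dim_cone_gen f a /\ primitive_int a].
Definition Gamma1_plus f : set ('I_n -> R) :=
  [set a | Gamma1 f a /\ 0 < m_f f a].

Definition L_e f : R :=
  sup ([set 0] `|` [set 1 - sv a / m_f f a | a in Gamma1_plus f]).

Definition R_1 f : set ('I_n -> R) :=
  [set a | nonneg a /\ 0 <= m_f f a <= 1].

End Newton.

(* Main.v *)
Require Import Defs.
From HB Require Import structures.
From mathcomp Require Import all_boot all_order all_algebra mpoly.
From mathcomp Require Import boolp classical_sets reals ring lra zify.

Set Implicit Arguments.
Unset Strict Implicit.
Unset Printing Implicit Defensive.
Import Order.TTheory GRing.Theory Num.Theory.
Local Open Scope ring_scope.
Local Open Scope classical_set_scope.

Lemma seq_argmin (R : realType) (T : eqType) (s : seq T) (F : T -> R) :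
  s != [::] -> exists2 x, x \in s & forall y, y \in s -> F x <= F y.
Proof.
elim: s => // x s IH _.
case: (eqVneq s [::]) => [->|/IH [z zs Hz]].
  by exists x; rewrite ?mem_head // => y; rewrite inE => /eqP ->.
case: (lerP (F x) (F z)) => Hxz.
  exists x; first exact: mem_head.
  move=> y; rewrite inE => /orP [/eqP ->//|/Hz]; exact: le_trans.
exists z; first by rewrite inE zs orbT.
move=> y; rewrite inE => /orP [/eqP ->|/Hz //]; exact: ltW.
Qed.

Section LP.
Variables (R : realType) (n k : nat) (cf : 'I_k -> 'I_n -> R) (rh : 'I_k -> R).
Definition gl j (x : 'I_n -> R) := \sum_i cf j i * x i.
Definition feas x := forall j, rh j <= gl j x.
Definition tset x : {set 'I_k} := [set j | gl j x == rh j].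
Definition ktriv x := forall d, (forall j, gl j x = rh j -> gl j d = 0) ->
  d = (fun _ => 0).
Hypothesis Hpos : forall d : 'I_n -> R, (forall j, 0 <= gl j d) ->
  sv d <= 0 -> d = (fun _ => 0).

Lemma gl_lin j x d t : gl j (fun i => x i + t * d i) = gl j x + t * gl j d.
Proof.
rewrite /gl mulr_sumr -big_split /=; apply: eq_bigr => i _.
by rewrite mulrDr mulrCA.
Qed.

Lemma gl_opp j d : gl j (fun i => - d i) = - gl j d.
Proof. by rewrite /gl -sumrN; apply: eq_bigr => i _; rewrite mulrN. Qed.

Lemma sv_lin (x d : 'I_n -> R) (t : R) : sv (fun i => x i + t * d i) = sv x + t * sv d.
Proof. by rewrite /sv mulr_sumr -big_split. Qed.

Lemma lp_step x : feas x -> ~ ktriv x ->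
  exists y, [/\ feas y, sv y <= sv x & tset x \proper tset y].
Proof.
move=> Fx nk.
have [d [Hd dn0]] : exists d, (forall j, gl j x = rh j -> gl j d = 0) /\
    d <> (fun _ => 0).
  apply: contrapT => H; apply: nk => d Hd; apply: contrapT => dn.
  by apply: H; exists d.
pose e := if sv d <= 0 then d else (fun i => - d i).
have He : forall j, gl j x = rh j -> gl j e = 0.
  by move=> j /Hd; rewrite /e; case: ifP => // _; rewrite gl_opp => ->; rewrite oppr0.
have en0 : e <> (fun _ => 0).
  rewrite /e; case: ifP => // _ E; apply: dn0; apply/funext => i.
  by have /= := congr1 (fun g => g i) E => /eqP; rewrite oppr_eq0 => /eqP.
have se : sv e <= 0.
  rewrite /e; case: ifP => // /negbT; rewrite -ltNge => H.
  by rewrite /sv sumrN oppr_le0 ltW.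
have [j1 Hj1] : exists j, gl j e < 0.
  apply: contrapT => H; apply: en0; apply: Hpos => // j.
  by rewrite leNgt; apply/negP => Hj; apply: H; exists j.
pose L := [seq j <- enum 'I_k | gl j e < 0].
have Ln : L != [::].
  apply/eqP => E; have : j1 \in L by rewrite mem_filter Hj1 mem_enum.
  by rewrite E.
pose F j := (gl j x - rh j) / (- gl j e).
have [j0 j0L Hj0] := seq_argmin F Ln.
have j0n : gl j0 e < 0 by move: j0L; rewrite mem_filter => /andP [].
pose t := F j0.
have t0 : 0 <= t.
  by rewrite /t /F divr_ge0 // ?subr_ge0 ?Fx // oppr_ge0 ltW.
pose y := fun i => x i + t * e i.
exists y; split.
- move=> j; rewrite /y gl_lin.
  case: (lerP 0 (gl j e)) => Hj.
    have := Fx j; have : 0 <= t * gl j e by rewrite mulr_ge0.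
    lra.
  have jL : j \in L by rewrite mem_filter Hj mem_enum.
  have := Hj0 j jL; rewrite {2}/F ler_pdivlMr ?oppr_gt0 //.
  rewrite mulrN -/t; lra.
- rewrite /y sv_lin; have : t * sv e <= 0 by rewrite mulr_ge0_le0.
  lra.
- apply/properP; split.
  + apply/fintype.subsetP => j; rewrite !inE => /eqP Hj.
    by rewrite /y gl_lin (He j Hj) mulr0 addr0 Hj.
  + exists j0.
      rewrite inE /y gl_lin /t /F; apply/eqP.
      have : gl j0 e != 0 by rewrite lt_eqF.
      move=> Hn; field; exact: Hn.
    rewrite inE; apply/negP => /eqP /He; move/eqP; rewrite lt_eqF //.
Qed.

Lemma lp_reduce x : feas x -> exists y, [/\ feas y, sv y <= sv x & ktriv y].
Proof.
move: {2}(k - #|tset x|)%N (leqnn (k - #|tset x|)%N) => m.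
elim: m x => [|m IH] x Hm Fx.
  case: (pselect (ktriv x)) => kx; first by exists x.
  have [y [_ _ /proper_card Hc]] := lp_step Fx kx.
  have : (#|tset y| <= k)%N by rewrite -[X in (_ <= X)%N]card_ord max_card.
  lia.
case: (pselect (ktriv x)) => kx; first by exists x.
have [y [Fy sy /proper_card Hc]] := lp_step Fx kx.
have Hk : (#|tset y| <= k)%N by rewrite -[X in (_ <= X)%N]card_ord max_card.
have [z [Fz sz kz]] := IH y ltac:(lia) Fy.
by exists z; split => //; apply: le_trans sy.
Qed.

End LP.

Section Rat.
Variables (R : realType) (n k : nat) (cfN : 'I_k -> 'I_n -> nat) (rhN : 'I_k -> nat).
Let cf := fun j i => (cfN j i)%:R : R.
Let rh := fun j => (rhN j)%:R : R.

Lemma ktriv_rat x : ktriv cf rh x -> exists q : 'I_n -> rat, forall i, x i = ratr (q i).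
Proof.
move=> kx.
pose t j := gl cf j x == rh j.
pose BQ : 'M[rat]_(n, k) := \matrix_(i, j) if t j then (cfN j i)%:R else 0.
pose eQ : 'rV[rat]_k := \row_j if t j then (rhN j)%:R else 0.
pose BR := map_mx (@ratr R) BQ.
pose xr : 'rV[R]_n := \row_i x i.
have H1 : xr *m BR = map_mx (@ratr R) eQ.
  apply/rowP => j; rewrite !mxE.
  rewrite (eq_bigr (fun i => if t j then cf j i * x i else 0)); last first.
    by move=> i _; rewrite !mxE; case: (t j); rewrite ?rmorph_nat ?rmorph0 ?mulr0 // mulrC.
  case Htj: (t j); last by rewrite big1 // rmorph0.
  by rewrite rmorph_nat; apply/eqP; exact: Htj.
have H2 : row_free BR.
  rewrite -kermx_eq0; apply/eqP; apply/row_matrixP => i; rewrite row0.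
  set u := row i (kermx BR).
  have uB : u *m BR = 0 by rewrite /u -row_mul mulmx_ker row0.
  clearbody u.
  pose d := fun i' => u 0 i'.
  have : d = (fun _ => 0).
    apply: kx => j Hj.
    have /rowP /(_ j) := uB; rewrite !mxE => E.
    rewrite -[RHS]E /gl; apply: eq_bigr => i' _; rewrite !mxE /t Hj eqxx rmorph_nat mulrC.
    by [].
  move=> E; apply/rowP => j; rewrite mxE.
  have := congr1 (fun g => g j) E; rewrite /d /= => ->.
  by [].
have : (eQ <= BQ)%MS by rewrite -(map_submx (@ratr R)) -H1 submxMl.
case/submxP => D HD.
have : xr = map_mx (@ratr R) D.
  apply: (row_free_inj H2); rewrite H1 HD map_mxM //.
move=> E; exists (fun i => D 0 i) => i.
by have /rowP /(_ i) := E; rewrite !mxE.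
Qed.
End Rat.

Lemma intrM' (R : realType) (a b : int) : ((a * b)%:~R : R) = a%:~R * b%:~R.
Proof. exact: intrM. Qed.

Lemma rat_scale (R : realType) (n : nat) (q : 'I_n -> rat) (i0 : 'I_n) :
  (forall i, 0 <= q i) -> q i0 != 0 ->
  exists (kk : 'I_n -> nat) (lam : R), [/\ 0 < lam,
    forall i, (kk i)%:R = lam * ratr (q i) & \big[gcdn/0]_i kk i = 1%N].
Proof.
move=> q0 qi0.
pose D := \prod_j denq (q j).
pose kz i := numq (q i) * \prod_(j | j != i) denq (q j).
have kzE i : ((kz i)%:~R : R) = ratr (q i) * D%:~R.
  rewrite /kz /D intrM' [in RHS](bigD1 i) //= intrM' mulrA; congr (_ * _).
  have := congr1 (@ratr R) (numqE (q i)).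
  by rewrite rmorphM /= !rmorph_int.
have kz0 i : 0 <= kz i.
  by rewrite /kz mulr_ge0 ?numq_ge0 // prodr_ge0 // => j _; rewrite denq_ge0.
pose kn i := `|kz i|%N.
have knE i : (kn i)%:R = ratr (q i) * (D%:~R : R).
  by rewrite /kn natr_absz ger0_norm ?kz0 // kzE.
pose g := \big[gcdn/0]_i kn i.
have gd i : (g %| kn i)%N by apply: (@biggcdn_inf _ i).
have g0 : (0 < g)%N.
  have kpos : (0 < kn i0)%N.
    rewrite /kn absz_gt0 /kz mulf_neq0 // ?numq_eq0 //.
    by apply/prodf_neq0 => j _; rewrite denq_neq0.
  rewrite lt0n; apply/negP => /eqP g00.
  have := gd i0; rewrite g00 dvd0n => /eqP E.
  by rewrite E in kpos.
pose kk i := (kn i %/ g)%N.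
have kkE i : (kk i * g)%N = kn i by rewrite divnK.
exists kk, (D%:~R / g%:R); split.
- apply: divr_gt0; last by rewrite ltr0n.
  by rewrite ltr0z /D prodr_gt0 // => j _; rewrite denq_gt0.
- move=> i; apply: (mulIf (_ : g%:R != 0 :> R)); first by rewrite pnatr_eq0 -lt0n.
  rewrite -natrM kkE knE; field.
  by rewrite pnatr_eq0 -lt0n.
- have Eg : \big[gcdn/0]_i (g * kk i)%N = g.
    by apply: eq_bigr => i _; rewrite mulnC kkE.
  have E := big_morph (fun x => g * x)%N (muln_gcdr g) (muln0 g) (index_enum 'I_n) xpredT kk.
  rewrite Eg in E.
  by apply/eqP; rewrite -(eqn_pmul2l g0) muln1 E.
Qed.

Section Main.
Variables (R : realType) (n : nat) (f : {mpoly R[n]}).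
Local Notation ev := (@expv R n).
Local Notation V := (msupp f).
Local Notation K := (size (msupp f)).

Lemma shifted_Gamma y : shifted_supp f y -> Gamma_plus f y.
Proof.
move=> Hy; exists 1%N, (fun _ => 1), (fun _ => y); split => //.
- by rewrite big_ord1.
- by move=> i; rewrite big_ord1 mul1r.
Qed.

Lemma Gamma_lb a L x : nonneg a ->
  (forall m, m \in msupp f -> L <= dotv a (ev m)) ->
  Gamma_plus f x -> L <= dotv a x.
Proof.
move=> a0 HL [k [w [p [w0 w1 Sp Hx]]]].
rewrite /dotv (eq_bigr (fun i => \sum_(j < k) a i * (w j * p j i))); last first.
  by move=> i _; rewrite Hx mulr_sumr.
rewrite exchange_big /=.
have -> : L = \sum_(j < k) w j * L by rewrite -mulr_suml w1 mul1r.
apply: ler_sum => j _.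
rewrite (eq_bigr (fun i => w j * (a i * p j i))); last first.
  by move=> i _; rewrite mulrCA.
rewrite -mulr_sumr; apply: ler_wpM2l => //.
case: (Sp j) => m mV Hm.
apply: (le_trans (HL m mV)); apply: ler_sum => i _.
by apply: ler_wpM2l.
Qed.

Lemma mf_char a m0 : nonneg a -> m0 \in msupp f ->
  (forall m, m \in msupp f -> dotv a (ev m0) <= dotv a (ev m)) ->
  m_f f a = dotv a (ev m0).
Proof.
move=> a0 m0V Hm; rewrite /m_f.
have G0 : Gamma_plus f (ev m0) by apply: shifted_Gamma; exists m0.
apply/eqP; rewrite eq_le; apply/andP; split.
- apply: ge_inf; first by exists (dotv a (ev m0)) => _ [x Gx <-]; exact: Gamma_lb.
  by exists (ev m0).
- apply: lb_le_inf; first by exists (dotv a (ev m0)), (ev m0).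
  by move=> _ [x Gx <-]; exact: Gamma_lb.
Qed.

Lemma mf_empty a : msupp f = [::] -> m_f f a = 0.
Proof.
move=> E; rewrite /m_f.
suff -> : [set dotv a x | x in Gamma_plus f] = set0 by rewrite /inf image_set0 sup0 oppr0.
apply/seteqP; split => // y [x Gx _].
move: Gx => [k [w [p [_ w1 Sp _]]]].
case: k w p w1 Sp => [|k] w p w1 Sp.
  by rewrite big_ord0 in w1; move/eqP: w1; rewrite eq_sym oner_eq0.
by case: (Sp ord0) => m; rewrite E.
Qed.

Lemma dotv_lin (a b : 'I_n -> R) (t : R) y :
  dotv (fun i => a i + t * b i) y = dotv a y + t * dotv b y.
Proof. by rewrite /dotv mulr_sumr -big_split; apply: eq_bigr => i _ /=; rewrite mulrDl mulrA. Qed.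

Lemma dotv_scale (a : 'I_n -> R) (t : R) y :
  dotv (fun i => t * a i) y = t * dotv a y.
Proof. by rewrite /dotv mulr_sumr; apply: eq_bigr => i _ /=; rewrite mulrA. Qed.

Lemma sv_scale (a : 'I_n -> R) (t : R) : sv (fun i => t * a i) = t * sv a.
Proof. by rewrite /sv mulr_sumr. Qed.

Lemma dotv_delta (c : 'I_n -> R) (y : 'I_n -> R) i :
  dotv c (fun i' => y i' + (i' == i)%:R) = dotv c y + c i.
Proof.
rewrite /dotv (eq_bigr (fun i' => c i' * y i' + c i' * (i' == i)%:R)); last first.
  by move=> j _; rewrite mulrDr.
rewrite big_split /=; congr (_ + _).
rewrite (bigD1 i) //= eqxx mulr1 big1 ?addr0 //.
by move=> j /negbTE ->; rewrite mulr0.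
Qed.

Definition cfN (j : 'I_(n + K)) (i : 'I_n) : nat :=
  match split j with inl i0 => nat_of_bool (i0 == i) | inr l => (nth 0%MM V l) i end.
Definition rhN (j : 'I_(n + K)) : nat :=
  match split j with inl _ => 0%N | inr _ => 1%N end.
Local Notation cf := (fun j i => (cfN j i)%:R : R).
Local Notation rh := (fun j => (rhN j)%:R : R).

Lemma gl_inl i0 x : gl cf (lshift K i0) x = x i0.
Proof.
rewrite /gl /cfN (unsplitK (inl _ i0)) (bigD1 i0) //= eqxx mul1r big1 ?addr0 //.
by move=> j /negbTE; rewrite eq_sym => ->; rewrite mul0r.
Qed.

Lemma gl_inr l x : gl cf (rshift n l) x = dotv x (ev (nth 0%MM V l)).
Proof.
rewrite /gl /cfN (unsplitK (inr _ l)) /dotv; apply: eq_bigr => i _.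
by rewrite mulrC.
Qed.

Lemma rh_inl i0 : rh (lshift K i0) = 0.
Proof. by rewrite /rhN (unsplitK (inl _ i0)). Qed.
Lemma rh_inr l : rh (rshift n l) = 1.
Proof. by rewrite /rhN (unsplitK (inr _ l)). Qed.

Lemma jcase (P : 'I_(n + K) -> Prop) :
  (forall i, P (lshift K i)) -> (forall l, P (rshift n l)) -> forall j, P j.
Proof.
move=> H1 H2 j; rewrite -(splitK j); case: (split j) => [i|l]; [exact: H1|exact: H2].
Qed.

Lemma Hpos_c (d : 'I_n -> R) : (forall j, 0 <= gl cf j d) -> sv d <= 0 -> d = (fun _ => 0).
Proof.
move=> H sd.
have d0 : forall i, 0 <= d i by move=> i; have := H (lshift K i); rewrite gl_inl.
have s0 : sv d = 0 by apply/eqP; rewrite eq_le sd sumr_ge0.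
apply/funext => i; exact: (psumr_eq0P (fun i _ => d0 i) s0).
Qed.

Lemma feas_nonneg x : feas cf rh x -> nonneg x.
Proof. by move=> F i; have := F (lshift K i); rewrite gl_inl rh_inl. Qed.

Lemma feas_V x : feas cf rh x -> forall m, m \in V -> 1 <= dotv x (ev m).
Proof.
move=> F m mV; have := F (rshift n (Ordinal (etrans (index_mem m V) mV))).
by rewrite gl_inr rh_inr /= nth_index.
Qed.

Lemma core a : nonneg a -> 0 < m_f f a ->
  exists r, Gamma1_plus f r /\ sv r / m_f f r <= sv a / m_f f a.
Proof.
move=> a0 ma0.
have Vn : V != [::].
  by apply/eqP => E; move: ma0; rewrite mf_empty // ltxx.
set ma := m_f f a in ma0 *.
have [m0 m0V Hm0] := seq_argmin (fun m => dotv a (ev m)) Vn.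
have maE : ma = dotv a (ev m0) by rewrite /ma (mf_char a0 m0V Hm0).
pose b0 := fun i => ma^-1 * a i.
have Fb0 : feas cf rh b0.
  apply: jcase => [i|l].
    by rewrite gl_inl rh_inl /b0 mulr_ge0 // invr_ge0 ltW.
  rewrite gl_inr rh_inr /b0 dotv_scale ler_pdivlMl // mulr1 maE.
  by apply: Hm0; apply: mem_nth; apply: ltn_ord.
have [b [Fb sb kb]] := lp_reduce Hpos_c Fb0.
have b0n := feas_nonneg Fb.
have bV := feas_V Fb.
have [j0 bj0] : exists j0, b j0 != 0.
  apply: contrapT => H.
  have : 1 <= dotv b (ev m0) by apply: bV.
  rewrite /dotv big1 ?ler10 // => i _.
  have -> : b i = 0 by apply: contrapT => Hi; apply: H; exists i; apply/eqP.
  by rewrite mul0r.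
have [l1 Hl1] : exists l : 'I_K, dotv b (ev (nth 0%MM V l)) = 1.
  apply: contrapT => H.
  pose d := fun i : 'I_n => ((i == j0)%:R : R).
  have : d = (fun _ => 0).
    apply: kb; apply: jcase => [i|l].
      rewrite gl_inl rh_inl gl_inl /d => Hi.
      case: (eqVneq i j0) => [E|//]; by move: bj0; rewrite -E Hi eqxx.
    by rewrite gl_inr rh_inr => Hl; exfalso; apply: H; exists l.
  by move/(congr1 (fun g => g j0)); rewrite /d eqxx /= => /eqP; rewrite oner_eq0.
set nu1 := nth 0%MM V l1 in Hl1.
have nu1V : nu1 \in V by rewrite /nu1; apply: mem_nth; apply: ltn_ord.
have [q Hq] := ktriv_rat kb.
have q0 : forall i, 0 <= q i by move=> i; rewrite -(ler0q R) -Hq.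
have qj0 : q j0 != 0 by apply: contraNneq bj0 => E; rewrite Hq E rmorph0.
have [kk [lam [lam0 Hkk Hg]]] := @rat_scale R n q j0 q0 qj0.
pose r := fun i => (kk i)%:R : R.
have rE : r = (fun i => lam * b i).
  by apply/funext => i; rewrite /r Hkk Hq.
have mr : m_f f r = lam.
  have r0 : nonneg r by move=> i; rewrite rE mulr_ge0 // ltW.
  have Hmin : forall m, m \in V -> dotv r (ev nu1) <= dotv r (ev m).
    by move=> m mV; rewrite rE !dotv_scale Hl1 mulr1 ler_pMr // bV.
  by rewrite (mf_char r0 nu1V Hmin) rE dotv_scale Hl1 mulr1.
exists r; split; last first.
  rewrite mr rE sv_scale mulrC mulrA mulVf ?mul1r ?lt0r_neq0 //.
  apply: (le_trans sb); rewrite /b0 sv_scale mulrC.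
  by [].
split; last by rewrite mr.
split; last by exists kk.
split; first by move=> i; rewrite rE mulr_ge0 // ltW.
split.
  move/(congr1 (fun g => g j0)); rewrite rE /= => /eqP.
  by rewrite mulf_eq0 (negbTE bj0) orbF (negbTE (lt0r_neq0 lam0)).
move=> c c0 Hgam.
pose M := m_f f c.
have inGam : forall y, Gamma_plus f y -> dotv b y = 1 -> dotv c y = M.
  move=> y Gy by1.
  have : gamma_f f r y by split => //; rewrite mr rE dotv_scale by1 mulr1.
  by rewrite -Hgam => -[].
have cV : forall m, m \in V -> dotv b (ev m) = 1 -> dotv c (ev m) = M.
  by move=> m mV H; apply: inGam => //; apply: shifted_Gamma; exists m.
have ci : forall i, b i = 0 -> c i = 0.
  move=> i bi.
  pose y := fun i' => ev nu1 i' + (i' == i)%:R.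
  have Gy : Gamma_plus f y.
    apply: shifted_Gamma; exists nu1 => // i'.
    by rewrite /y lerDl ler0n.
  have := inGam y Gy; rewrite /y !dotv_delta bi addr0 Hl1 => /(_ erefl).
  rewrite (cV nu1 nu1V Hl1) => /eqP.
  by rewrite -subr_eq0 addrC addKr => /eqP.
pose d := fun i => c i + (- M) * b i.
have : d = (fun _ => 0).
  apply: kb; apply: jcase => [i|l].
    rewrite !gl_inl rh_inl /d => bi; by rewrite (ci i bi) bi mulr0 addr0.
  rewrite !gl_inr rh_inr /d dotv_lin => Hl.
  by rewrite (cV _ (mem_nth _ (ltn_ord l)) Hl) Hl mulr1 addrN.
move=> E; exists (M / lam); apply/funext => i.
have := congr1 (fun g => g i) E; rewrite /d /= rE => /eqP.
rewrite mulNr subr_eq0 => /eqP ->.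
by field; rewrite lt0r_neq0.
Qed.

End Main.

Lemma mf_scale (R : realType) (n : nat) (f : {mpoly R[n]}) (a : 'I_n -> R) (t : R) :
  nonneg a -> 0 < t -> m_f f (fun i => t * a i) = t * m_f f a.
Proof.
move=> a0 t0.
case: (eqVneq (msupp f) [::]) => [E|Vn]; first by rewrite !mf_empty // mulr0.
have [m0 m0V Hm0] := seq_argmin (fun m => dotv a (expv R m)) Vn.
have ta0 : nonneg (fun i => t * a i) by move=> i; rewrite mulr_ge0 // ltW.
rewrite (mf_char a0 m0V Hm0) (@mf_char _ _ _ _ m0) ?dotv_scale //.
by move=> m mV; rewrite !dotv_scale ler_pM2l // Hm0.
Qed.

Lemma mf0 (R : realType) (n : nat) (f : {mpoly R[n]}) : m_f f (fun _ => 0) = 0.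
Proof.
case: (eqVneq (msupp f) [::]) => [E|Vn]; first by rewrite !mf_empty.
have [m0 m0V Hm0] := seq_argmin (fun m => dotv (fun _ : 'I_n => 0 : R) (expv R m)) Vn.
rewrite (mf_char _ m0V Hm0) // /dotv big1 // => i _; by rewrite mul0r.
Qed.

Theorem mainTheorem5 (R : realType) (n : nat) (f : {mpoly R[n]}) :
  newton_nondegenerate f ->
  meval (fun _ => 0) f = 0 ->
  L_e f = sup [set h_f f a | a in R_1 f].
Proof.
move=> _ _.
set H := [set h_f f a | a in R_1 f].
rewrite /L_e.
set S := [set 0] `|` _.
have sv0 : forall a : 'I_n -> R, nonneg a -> 0 <= sv a.
  by move=> a a0; rewrite /sv sumr_ge0.
have H0 : H 0.
  exists (fun _ => 0); last by rewrite /h_f mf0 /sv big1 // subr0.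
  by split; [move=> i|rewrite mf0 lexx ler01].
have hasH : has_sup H.
  split; first by exists 0.
  exists 1 => _ [a [a0 /andP [_ m1]] <-].
  by rewrite /h_f; have := sv0 a a0; lra.
have S0 : S 0 by left.
have hasS : has_sup S.
  split; first by exists 0.
  exists 1 => _ [-> | [a [[[a0 _] _] ma] <-]]; first exact: ler01.
  by rewrite lerBlDr lerDl divr_ge0 // ?sv0 // ltW.
apply/eqP; rewrite eq_le; apply/andP; split.
- apply: ge_sup; first by exists 0.
  move=> _ [-> | [a [[[a0 _] _] ma] <-]]; first exact: sup_upper_bound.
  apply: sup_upper_bound => //.
  exists (fun i => (m_f f a)^-1 * a i).
    split; first by move=> i; rewrite mulr_ge0 // invr_ge0 ltW.
    by rewrite mf_scale ?invr_gt0 // mulVf ?lt0r_neq0 // ler01 lexx.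
  rewrite /h_f mf_scale ?invr_gt0 // mulVf ?lt0r_neq0 //.
  by rewrite sv_scale mulrC.
- apply: ge_sup; first by exists 0.
  move=> _ [a [a0 /andP [m0 m1]] <-].
  case: (lerP (h_f f a) 0) => hp; first by apply: le_trans hp (sup_upper_bound hasS S0).
  have ma : 0 < m_f f a by move: hp; rewrite /h_f; have := sv0 a a0; lra.
  have [r [Gr Hr]] := core a0 ma.
  have Sr : S (1 - sv r / m_f f r) by right; exists r.
  apply: le_trans (sup_upper_bound hasS Sr).
  apply: (@le_trans _ _ (1 - sv a / m_f f a)); last by rewrite lerB.
  rewrite /h_f.
  set u := sv a / m_f f a.
  have su : sv a = u * m_f f a by rewrite /u divfK ?lt0r_neq0.
  have u1 : u <= 1.
    by rewrite /u ler_pdivrMr // mul1r; move: hp; rewrite /h_f; lra.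
  rewrite su.
  have : 0 <= (1 - u) * (1 - m_f f a) by rewrite mulr_ge0 // subr_ge0.
  rewrite mulrBl mul1r mulrBr mulr1; lra.
Qed.
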